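(* The category of pastures has fibered products: for any pastures $P_1,P_2,P$ and morphisms $f_1:P_1\to P$, $f_2:P_2\to P$, there is a pasture $P_1\times_P P_2$ with morphisms $\pi_1:P_1\times_PP_2\to P_1$, $\pi_2:P_1\times_PP_2\to P_2$ satisfying $f_1\circ\pi_1=f_2\circ\pi_2$, such that for every pasture $P'$ and morphisms $g_1:P'\to P_1$, $g_2:P'\to P_2$ with $f_1\circ g_1=f_2\circ g_2$ there is a unique morphism $g_*:P'\to P_1\times_PP_2$ with $\pi_1\circ g_*=g_1$ and $\pi_2\circ g_*=g_2$.
   Context: A pasture is a multiplicative monoid $P$ with a zero element $0$ (absorbing: $0\cdot x=0$ for all $x$) such that $P^\times=P\setminus\{0\}$ is an abelian group under the multiplication, together with an involution $x\mapsto -x$ of $P$ fixing $0$, and a subset $N_P\subseteq P^3$ (the nullset; one writes $a+b+c=0$ to mean $(a,b,c)\in N_P$) such that: (1) $N_P$ is invariant under permutations of the three coordinates; (2) if $a+b+c=0$ then $da+db+dc=0$ for every $d\in P$; (3) $a+b+0=0$ if and only if $a=-b$. A morphism of pastures $f:P_1\to P_2$ is a multiplicative map with $f(0)=0$, $f(1)=1$, $f(-a)=-f(a)$ for all $a$, and such that $f(a)+f(b)+f(c)=0$ in $N_{P_2}$ whenever $a+b+c=0$ in $N_{P_1}$. *)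

(* Defs.v *)
Set Implicit Arguments.

Record Pasture := {
  pcar :> Type;
  pzero : pcar;
  pone : pcar;
  pmul : pcar -> pcar -> pcar;
  pneg : pcar -> pcar;
  (* the nullset N_P ⊆ P^3 : pnull a b c means  a + b + c = 0 *)
  pnull : pcar -> pcar -> pcar -> Prop;
  pmulA : forall x y z, pmul x (pmul y z) = pmul (pmul x y) z;
  pmul1 : forall x, pmul pone x = x;
  pmul0 : forall x, pmul pzero x = pzero;
  pmulC : forall x y, pmul x y = pmul y x;
  pone_neq0 : pone <> pzero;
  pmul_neq0 : forall x y, x <> pzero -> y <> pzero -> pmul x y <> pzero;
  pinv_ex : forall x, x <> pzero -> exists y, pmul x y = pone;
  pnegK : forall x, pneg (pneg x) = x;
  pneg0 : pneg pzero = pzero;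
  (* (1) invariance under permutations (transpositions (12),(23) generate S3) *)
  pnull_swap12 : forall a b c, pnull a b c -> pnull b a c;
  pnull_swap23 : forall a b c, pnull a b c -> pnull a c b;
  pnull_scale : forall a b c d, pnull a b c -> pnull (pmul d a) (pmul d b) (pmul d c);
  pnull_0 : forall a b, pnull a b pzero <-> a = pneg b
}.

Record PastureMorph (P1 P2 : Pasture) := {
  pm_fun :> P1 -> P2;
  pm_zero : pm_fun (pzero P1) = pzero P2;
  pm_one : pm_fun (pone P1) = pone P2;
  pm_mul : forall x y, pm_fun (pmul P1 x y) = pmul P2 (pm_fun x) (pm_fun y);
  pm_neg : forall x, pm_fun (pneg P1 x) = pneg P2 (pm_fun x);
  pm_null : forall a b c, pnull P1 a b c ->
    pnull P2 (pm_fun a) (pm_fun b) (pm_fun c)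
}.

(* Main.v *)
Require Import Defs.
From Stdlib Require Import ProofIrrelevance Classical.

Definition Qc (P1 P2 P : Pasture) (f1 : PastureMorph P1 P) (f2 : PastureMorph P2 P) :=
  {p : pcar P1 * pcar P2 | f1 (fst p) = f2 (snd p)}.

Lemma qeq P1 P2 P f1 f2 (x y : @Qc P1 P2 P f1 f2) : proj1_sig x = proj1_sig y -> x = y.
Proof.
  destruct x as [x hx], y as [y hy]; simpl; intros e; subst y.
  f_equal; apply proof_irrelevance.
Qed.

Lemma morph_nz (A B : Pasture) (f : PastureMorph A B) x : x <> pzero A -> f x <> pzero B.
Proof.
  intros hx e. destruct (@pinv_ex A x hx) as [y hy].
  apply (pone_neq0 B). rewrite <- (pm_one f), <- hy, pm_mul, e, pmul0. reflexivity.
Qed.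

Lemma morph_z (A B : Pasture) (f : PastureMorph A B) x : f x = pzero B -> x = pzero A.
Proof.
  intros e. destruct (classic (x = pzero A)) as [h|h]; auto.
  exfalso; exact (@morph_nz A B f x h e).
Qed.

Lemma nz_iff P1 P2 P f1 f2 (q : @Qc P1 P2 P f1 f2) :
  fst (proj1_sig q) = pzero P1 <-> snd (proj1_sig q) = pzero P2.
Proof.
  destruct q as [[a b] h]; simpl in *; split; intros e; subst.
  - apply (@morph_z P2 P f2). rewrite <- h, pm_zero. reflexivity.
  - apply (@morph_z P1 P f1). rewrite h, pm_zero. reflexivity.
Qed.

Lemma inv_uniq (A : Pasture) x y y' : pmul A x y = pone A -> pmul A x y' = pone A -> y = y'.
Proof.
  intros h h'. rewrite <- (pmul1 A y), <- h', (pmulC A x y'), <- pmulA, h,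
    pmulC, pmul1. reflexivity.
Qed.

Section S.
End S.

Definition qzero P1 P2 P f1 f2 : @Qc P1 P2 P f1 f2.
Proof. refine (exist _ (pzero P1, pzero P2) _). simpl. rewrite !pm_zero. reflexivity. Defined.
Definition qone P1 P2 P f1 f2 : @Qc P1 P2 P f1 f2.
Proof. refine (exist _ (pone P1, pone P2) _). simpl. rewrite !pm_one. reflexivity. Defined.
Definition qmul P1 P2 P f1 f2 (x y : @Qc P1 P2 P f1 f2) : @Qc P1 P2 P f1 f2.
Proof.
  refine (exist _ (pmul P1 (fst (proj1_sig x)) (fst (proj1_sig y)),
                   pmul P2 (snd (proj1_sig x)) (snd (proj1_sig y))) _).
  simpl. rewrite !pm_mul, (proj2_sig x), (proj2_sig y). reflexivity.
Defined.
Definition qneg P1 P2 P f1 f2 (x : @Qc P1 P2 P f1 f2) : @Qc P1 P2 P f1 f2.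
Proof.
  refine (exist _ (pneg P1 (fst (proj1_sig x)), pneg P2 (snd (proj1_sig x))) _).
  simpl. rewrite !pm_neg, (proj2_sig x). reflexivity.
Defined.
Definition qnull P1 P2 P f1 f2 (a b c : @Qc P1 P2 P f1 f2) : Prop :=
  pnull P1 (fst (proj1_sig a)) (fst (proj1_sig b)) (fst (proj1_sig c)) /\
  pnull P2 (snd (proj1_sig a)) (snd (proj1_sig b)) (snd (proj1_sig c)).

Definition QP (P1 P2 P : Pasture) (f1 : PastureMorph P1 P) (f2 : PastureMorph P2 P) : Pasture.
Proof.
  refine (@Build_Pasture (@Qc P1 P2 P f1 f2) (@qzero P1 P2 P f1 f2) (@qone P1 P2 P f1 f2)
    (@qmul P1 P2 P f1 f2) (@qneg P1 P2 P f1 f2) (@qnull P1 P2 P f1 f2)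
    _ _ _ _ _ _ _ _ _ _ _ _ _).
  - intros; apply qeq; simpl; rewrite !pmulA; reflexivity.
  - intros [[a b] h]; apply qeq; simpl; rewrite !pmul1; reflexivity.
  - intros; apply qeq; simpl; rewrite !pmul0; reflexivity.
  - intros; apply qeq; simpl; rewrite (pmulC P1), (pmulC P2); reflexivity.
  - intros e. apply (f_equal (fun q => fst (proj1_sig q))) in e. exact (pone_neq0 P1 e).
  - intros x y hx hy e.
    assert (hx1 : fst (proj1_sig x) <> pzero P1).
    { intros e'. apply hx, qeq. destruct x as [[a b] h]; simpl in *.
      pose proof (proj1 (@nz_iff P1 P2 P f1 f2 (exist _ (a,b) h)) e'); simpl in *; subst; reflexivity. }
    assert (hy1 : fst (proj1_sig y) <> pzero P1).
    { intros e'. apply hy, qeq. destruct y as [[a b] h]; simpl in *.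
      pose proof (proj1 (@nz_iff P1 P2 P f1 f2 (exist _ (a,b) h)) e'); simpl in *; subst; reflexivity. }
    apply (f_equal (fun q => fst (proj1_sig q))) in e. simpl in e.
    exact (@pmul_neq0 P1 _ _ hx1 hy1 e).
  - intros x hx.
    assert (hx1 : fst (proj1_sig x) <> pzero P1).
    { intros e'. apply hx, qeq. destruct x as [[a b] h]; simpl in *.
      pose proof (proj1 (@nz_iff P1 P2 P f1 f2 (exist _ (a,b) h)) e'); simpl in *; subst; reflexivity. }
    assert (hx2 : snd (proj1_sig x) <> pzero P2).
    { intros e'. apply hx1, (proj2 (@nz_iff P1 P2 P f1 f2 x) e'). }
    destruct (@pinv_ex P1 _ hx1) as [y1 h1].
    destruct (@pinv_ex P2 _ hx2) as [y2 h2].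
    assert (hy : f1 (fst (y1, y2)) = f2 (snd (y1, y2))).
    { simpl. apply (@inv_uniq P (f1 (fst (proj1_sig x))) _ _).
      - rewrite <- pm_mul, h1, pm_one; reflexivity.
      - rewrite (proj2_sig x), <- pm_mul, h2, pm_one; reflexivity. }
    exists (exist _ (y1, y2) hy). apply qeq; simpl. rewrite h1, h2. reflexivity.
  - intros [[a b] h]; apply qeq; simpl; rewrite !pnegK; reflexivity.
  - apply qeq; simpl; rewrite !pneg0; reflexivity.
  - intros a b c [h1 h2]; split; apply pnull_swap12; assumption.
  - intros a b c [h1 h2]; split; apply pnull_swap23; assumption.
  - intros a b c d [h1 h2]; split; simpl; apply pnull_scale; assumption.
  - intros [[a1 a2] ha] [[b1 b2] hb]; unfold qnull; simpl; split.
    + intros [h1 h2]. apply qeq; simpl.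
      rewrite (proj1 (pnull_0 _ _ _) h1), (proj1 (pnull_0 _ _ _) h2). reflexivity.
    + intros e. apply (f_equal (@proj1_sig _ _)) in e. simpl in e.
      inversion e; subst; split; apply pnull_0; reflexivity.
Defined.

Definition pi1 (P1 P2 P : Pasture) (f1 : PastureMorph P1 P) (f2 : PastureMorph P2 P) : PastureMorph (@QP P1 P2 P f1 f2) P1.
Proof.
  refine (@Build_PastureMorph (@QP P1 P2 P f1 f2) P1 (fun q => fst (proj1_sig q)) _ _ _ _ _);
    simpl; try reflexivity.
  intros a b c [h1 h2]; exact h1.
Defined.
Definition pi2 (P1 P2 P : Pasture) (f1 : PastureMorph P1 P) (f2 : PastureMorph P2 P) : PastureMorph (@QP P1 P2 P f1 f2) P2.
Proof.
  refine (@Build_PastureMorph (@QP P1 P2 P f1 f2) P2 (fun q => snd (proj1_sig q)) _ _ _ _ _);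
    simpl; try reflexivity.
  intros a b c [h1 h2]; exact h2.
Defined.

Theorem theorem2p5 :
  forall (P1 P2 P : Pasture) (f1 : PastureMorph P1 P) (f2 : PastureMorph P2 P),
  exists (Q : Pasture) (pi1 : PastureMorph Q P1) (pi2 : PastureMorph Q P2),
    (forall q : Q, f1 (pi1 q) = f2 (pi2 q)) /\
    (forall (P' : Pasture) (g1 : PastureMorph P' P1) (g2 : PastureMorph P' P2),
       (forall x : P', f1 (g1 x) = f2 (g2 x)) ->
       exists g : PastureMorph P' Q,
         (forall x : P', pi1 (g x) = g1 x) /\ (forall x : P', pi2 (g x) = g2 x) /\
         (forall h : PastureMorph P' Q,
            (forall x : P', pi1 (h x) = g1 x) -> (forall x : P', pi2 (h x) = g2 x) ->
            forall x : P', h x = g x)).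
Proof.
  intros P1 P2 P f1 f2.
  exists (@QP P1 P2 P f1 f2), (@pi1 P1 P2 P f1 f2), (@pi2 P1 P2 P f1 f2). split.
  - intros q. exact (proj2_sig q).
  - intros P' g1 g2 hg.
    unshelve eexists.
    + refine (@Build_PastureMorph P' (@QP P1 P2 P f1 f2)
        (fun x => exist _ (g1 x, g2 x) (hg x)) _ _ _ _ _).
      * apply qeq; simpl; rewrite !pm_zero; reflexivity.
      * apply qeq; simpl; rewrite !pm_one; reflexivity.
      * intros; apply qeq; simpl; rewrite !pm_mul; reflexivity.
      * intros; apply qeq; simpl; rewrite !pm_neg; reflexivity.
      * intros a b c h; split; simpl; apply pm_null; exact h.
    + simpl. split; [|split]; try reflexivity.
      intros h e1 e2 x. apply qeq. simpl.
      rewrite <- (e1 x), <- (e2 x). simpl. destruct (proj1_sig (h x)); reflexivity.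
Qed.
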